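(* Let $X=\{x_1,\dots,x_n\}$ be a finite $T_0$-space with matrix $X_M$, having rows $r_1,\dots,r_n$ and columns $c_1,\dots,c_n$. Then $x_i$ is an up beat point if and only if there exists $1\le j\le n$ with $r_i-r_j=-e_i$; and $x_i$ is a down beat point if and only if there exists $1\le j\le n$ with $c_i-c_j=-e_i$.
   Context: A finite $T_0$-space is identified with a finite poset via $x\le y$ iff $U_x\subseteq U_y$, where $U_x$ is the minimal open set containing $x$. For a labelling $X=\{x_1,\dots,x_n\}$, $X_M=(x_{i,j})$ is the $n\times n$ matrix with $x_{i,j}=0$ if $x_i\le x_j$ and $x_{i,j}=1$ otherwise. $e_i$ denotes the vector (row or column, as appropriate) with $1$ in position $i$ and $0$ elsewhere. Let $\hat U_x=\{y\in X: y<x\}$ and $\hat F_x=\{y\in X: y>x\}$. A point $x$ is a down beat point if $\hat U_x$ has a maximum, and an up beat point if $\hat F_x$ has a minimum. *)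

(* Defs.v *)
From HB Require Import structures.
From mathcomp Require Import all_boot all_order all_algebra.
Set Implicit Arguments. Unset Strict Implicit. Unset Printing Implicit Defensive.
Import Order.TTheory GRing.Theory.

(* A finite T0-space is identified with a finite poset (x <= y iff U_x ⊆ U_y).
   We take a finite partially ordered type T. *)
Section FiniteT0.
Context {d : Order.disp_t} {T : finPOrderType d}.
Local Open Scope order_scope.

Definition hatU (x : T) : {set T} := [set y | y < x].
Definition hatF (x : T) : {set T} := [set y | x < y].

Definition has_max (A : {set T}) : Prop :=
  exists2 m, m \in A & forall y, y \in A -> y <= m.
Definition has_min (A : {set T}) : Prop :=
  exists2 m, m \in A & forall y, y \in A -> m <= y.

Definition down_beat (x : T) : Prop := has_max (hatU x).
Definition up_beat (x : T) : Prop := has_min (hatF x).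

Definition XM (n : nat) (x : 'I_n -> T) : 'M[int]_n :=
  \matrix_(i < n, j < n) (if x i <= x j then 0%R else 1%R).
End FiniteT0.

Definition e_row (n : nat) (i : 'I_n) : 'rV[int]_n := delta_mx ord0 i.
Definition e_col (n : nat) (i : 'I_n) : 'cV[int]_n := delta_mx i ord0.

(* Main.v *)
Require Import Defs.
From HB Require Import structures.
From mathcomp Require Import all_boot all_order all_algebra.
Import Order.TTheory GRing.Theory.
Local Open Scope ring_scope.

Lemma key (n : nat) (R : rel 'I_n) (i : 'I_n)
  (Rrefl : forall a, R a a)
  (Ranti : forall a b, R a b -> R b a -> a = b)
  (Rtrans : forall a b c, R a b -> R b c -> R a c) :
  (exists j, forall k, ((if R i k then 0 else 1) - (if R j k then 0 else 1) : int)
        = - ((k == i)%:R)) <->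
  (exists j, [/\ j != i, R i j & forall k, k != i -> R i k -> R j k]).
Proof.
split.
- move=> [j Hj]; exists j.
  have Hji : ~~ R j i.
    by move: (Hj i); rewrite eqxx Rrefl; case: (R j i).
  have jni : j != i by apply/eqP => E; move: Hji; rewrite E Rrefl.
  split => //.
    by move: (Hj j); rewrite (negbTE jni) Rrefl; case: (R i j).
  move=> k kni Rik; move: (Hj k); rewrite (negbTE kni) Rik; by case: (R j k).
- move=> [j [jni Rij Hk]]; exists j => k.
  have [->|kni] := eqVneq k i.
    rewrite Rrefl.
    case E: (R j i) => //.
    by move: jni; rewrite (Ranti _ _ E Rij) eqxx.
  idtac.
  case E: (R i k); first by rewrite (Hk _ kni E).
  case E2: (R j k) => //.
  by rewrite (Rtrans _ _ _ Rij E2) in E.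
Qed.

Theorem mainTheorem2 (d : Order.disp_t) (T : finPOrderType d) (n : nat)
    (x : 'I_n -> T) (x_bij : bijective x) (i : 'I_n) :
  (up_beat (x i) <->
     exists j : 'I_n, row i (XM x) - row j (XM x) = - e_row i) /\
  (down_beat (x i) <->
     exists j : 'I_n, col i (XM x) - col j (XM x) = - e_col i).
Proof.
have xinj : injective x by apply: bij_inj.
case: x_bij => g xg gx.
split.
- pose R := fun a b : 'I_n => (x a <= x b)%O.
  have K := @key n R i (fun a => lexx (x a))
    (fun a b h1 h2 => xinj _ _ (le_anti (introT andP (conj h1 h2))))
    (fun a b c h1 h2 => le_trans h1 h2).
  have EE : (exists j : 'I_n, row i (XM x) - row j (XM x) = - e_row i) <->
     (exists j, forall k, ((if R i k then 0 else 1) - (if R j k then 0 else 1) : int)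
        = - ((k == i)%:R)).
    split => -[j Hj]; exists j.
      by move=> k; move/matrixP: Hj => /(_ ord0 k); rewrite !mxE eqxx.
    by apply/matrixP => a k; rewrite !mxE ord1 eqxx /=; apply: Hj.
  apply: (iff_trans _ (iff_sym (iff_trans EE K))); rewrite /up_beat /has_min /hatF; split.
  + move=> [m]; rewrite inE => im Hm; exists (g m); rewrite /R gx.
    split; last first.
    * move=> k kni Rik; apply: Hm; rewrite inE lt_neqAle Rik andbT.
      by apply/eqP => /xinj E; move: kni; rewrite E eqxx.
    * exact: ltW.
    * apply/eqP => E; move: im; by rewrite -E gx ltxx.
  + move=> [j [jni Rij Hk]]; rewrite /R in Rij Hk; exists (x j).
      rewrite inE lt_neqAle Rij andbT; apply/eqP => /xinj E.
      by move: jni; rewrite E eqxx.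
    move=> y; rewrite inE => iy; rewrite -(gx y); apply: Hk; rewrite ?gx.
      by apply/eqP => /(congr1 x); rewrite gx => E; move: iy; rewrite E ltxx.
    exact: ltW.
- pose R := fun a b : 'I_n => (x b <= x a)%O.
  have K := @key n R i (fun a => lexx (x a))
    (fun a b h1 h2 => xinj _ _ (le_anti (introT andP (conj h2 h1))))
    (fun a b c h1 h2 => le_trans h2 h1).
  have EE : (exists j : 'I_n, col i (XM x) - col j (XM x) = - e_col i) <->
     (exists j, forall k, ((if R i k then 0 else 1) - (if R j k then 0 else 1) : int)
        = - ((k == i)%:R)).
    split => -[j Hj]; exists j.
      by move=> k; move/matrixP: Hj => /(_ k ord0); rewrite !mxE eqxx andbT.
    by apply/matrixP => k a; rewrite !mxE ord1 eqxx andbT /=; apply: Hj.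
  apply: (iff_trans _ (iff_sym (iff_trans EE K))); rewrite /down_beat /has_max /hatU; split.
  + move=> [m]; rewrite inE => im Hm; exists (g m); rewrite /R gx.
    split; last first.
    * move=> k kni Rik; apply: Hm; rewrite inE lt_neqAle Rik andbT.
      by apply/eqP => /xinj E; move: kni; rewrite E eqxx.
    * exact: ltW.
    * apply/eqP => E; move: im; by rewrite -E gx ltxx.
  + move=> [j [jni Rij Hk]]; rewrite /R in Rij Hk; exists (x j).
      rewrite inE lt_neqAle Rij andbT; apply/eqP => /xinj E.
      by move: jni; rewrite E eqxx.
    move=> y; rewrite inE => iy; rewrite -(gx y); apply: Hk; rewrite ?gx.
      by apply/eqP => /(congr1 x); rewrite gx => E; move: iy; rewrite E ltxx.
    exact: ltW.
Qed.
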